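(* Let $\lambda\supseteq\mu$ be partitions, $T$ a cover-expansive Dyck tiling of $\lambda\setminus\mu$, and $\mathfrak a$ a node such that $\mathfrak a$ and $\mathtt N(\mathfrak a)$ both lie in $\lambda\setminus\mu$. Then $\operatorname{dp}(\mathtt N(\mathfrak a))<\operatorname{dp}(\mathfrak a)$.
   Context: Partitions are identified with Young diagrams $\{(a,b)\in\mathbb N^2:b\le\lambda_a\}$; nodes are elements of $\mathbb N^2$; $(a,b)$ has height $\operatorname{ht}(a,b)=a+b$ and lies in column $b-a$ (smaller column = further left). $\mathtt{NE}(\mathfrak n)=\mathfrak n+(0,1)$, $\mathtt{SW}(\mathfrak n)=\mathfrak n-(0,1)$, $\mathtt{SE}(\mathfrak n)=\mathfrak n-(1,0)$, $\mathtt N(\mathfrak n)=\mathfrak n+(1,1)$. A tile is a finite nonempty set $t$ of nodes orderable $\mathfrak n_1,\dots,\mathfrak n_r$ with $\mathfrak n_{i+1}\in\{\mathtt{NE}(\mathfrak n_i),\mathtt{SE}(\mathfrak n_i)\}$; start = leftmost node, end = rightmost node; $\operatorname{ht}(t)$ is the maximum height of its nodes; Dyck tile if start and end have height $\operatorname{ht}(t)$. The depth of $\mathfrak n\in t$ is $\operatorname{dp}(\mathfrak n)=\operatorname{ht}(t)-\operatorname{ht}(\mathfrak n)$. A Dyck tiling of $\lambda\setminus\mu$ is a partition of it into Dyck tiles. It is cover-expansive if (left) whenever $\mathfrak a,\mathtt{SE}(\mathfrak a)\in\lambda\setminus\mu$, the tile of $\mathtt{SE}(\mathfrak a)$ starts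 weakly left of the start of the tile of $\mathfrak a$, and (right) whenever $\mathfrak a,\mathtt{SW}(\mathfrak a)\in\lambda\setminus\mu$, the tile of $\mathtt{SW}(\mathfrak a)$ ends weakly right of the end of the tile of $\mathfrak a$. *)

(* Defs.v *)
(* Nodes are 0-indexed: node (a,b) with a,b : nat stands for
   the paper's node (a+1,b+1); heights shift by a constant 2 and columns are
   unchanged, so depths and column comparisons are unaffected. *)
From mathcomp Require Import all_boot all_order all_algebra.
Set Implicit Arguments. Unset Strict Implicit. Unset Printing Implicit Defensive.
Import Order.TTheory GRing.Theory Num.Theory.

Definition node := (nat * nat)%type.

Definition ht (n : node) : nat := n.1 + n.2.
Definition col (n : node) : int := (n.2%:Z - n.1%:Z)%R.

Definition Nnode (n : node) : node := (n.1.+1, n.2.+1).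

Definition is_partition (l : seq nat) : bool :=
  sorted geq l && all (fun x => 0 < x) l.

Definition in_diagram (l : seq nat) (n : node) : bool := n.2 < nth 0 l n.1.

Definition contains (l m : seq nat) : Prop :=
  forall n, in_diagram m n -> in_diagram l n.

Definition in_skew (l m : seq nat) (n : node) : bool :=
  in_diagram l n && ~~ in_diagram m n.

(* y = NE(x) or y = SE(x) *)
Definition tile_step (x y : node) : bool :=
  (y == (x.1, x.2.+1)) || (x == (y.1.+1, y.2)).

(* A tile is represented by its (unique) ordering n_1, ..., n_r with
   n_{i+1} in {NE(n_i), SE(n_i)}; columns strictly increase along it, so
   the first element is the leftmost node and the last the rightmost. *)
Definition is_tile (t : seq node) : bool :=
  if t is x :: s then path tile_step x s else false.

Definition tile_ht (t : seq node) : nat := \max_(n <- t) ht n.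
Definition tstart (t : seq node) : node := head (0, 0) t.
Definition tend (t : seq node) : node := last (0, 0) t.

Definition is_Dyck_tile (t : seq node) : bool :=
  [&& is_tile t, ht (tstart t) == tile_ht t & ht (tend t) == tile_ht t].

Definition dp (t : seq node) (n : node) : nat := tile_ht t - ht n.

Definition is_Dyck_tiling (l m : seq nat) (T : seq (seq node)) : Prop :=
  (forall t, t \in T -> is_Dyck_tile t /\ (forall n, n \in t -> in_skew l m n))
  /\ (forall n, in_skew l m n -> count (fun t => n \in t) T = 1).

Definition cover_expansive (l m : seq nat) (T : seq (seq node)) : Prop :=
  (* (left): b = SE(a) *)
  (forall (a b : node) (ta tb : seq node),
      in_skew l m a -> in_skew l m b -> b.1.+1 = a.1 -> b.2 = a.2 ->
      ta \in T -> a \in ta -> tb \in T -> b \in tb ->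
      (col (tstart tb) <= col (tstart ta))%R)
  /\
  (* (right): b = SW(a) *)
  (forall (a b : node) (ta tb : seq node),
      in_skew l m a -> in_skew l m b -> b.1 = a.1 -> b.2.+1 = a.2 ->
      ta \in T -> a \in ta -> tb \in T -> b \in tb ->
      (col (tend ta) <= col (tend tb))%R).

(* Main.v *)
Require Import Defs.
From mathcomp Require Import all_boot all_order all_algebra.
From mathcomp Require Import zify.
Import Defs.
Set Implicit Arguments. Unset Strict Implicit. Unset Printing Implicit Defensive.
Import Order.TTheory GRing.Theory Num.Theory.

Lemma step_col (x y : node) : tile_step x y -> col y = (col x + 1)%R.
Proof.
case: x y => [x1 x2] [y1 y2]; rewrite /tile_step /col /= => /orP [] /eqP [] -> ->; lia.
Qed.

Lemma col_nth (t : seq node) i : is_tile t -> i < size t ->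
  col (nth (0,0) t i) = (col (tstart t) + i%:Z)%R.
Proof.
case: t => [|x s] //= /(pathP (0,0)) Hp.
elim: i => [|i IH] Hi; first by rewrite addr0.
have /step_col -> := Hp i Hi.
rewrite IH ?(ltnW Hi) //; lia.
Qed.

Lemma tile_nonempty t : is_tile t -> tstart t \in t.
Proof. by case: t => //= x s _; rewrite inE eqxx. Qed.

Lemma tile_col_bounds t n : is_tile t -> n \in t ->
  (col (tstart t) <= col n)%R /\ (col n <= col (tend t))%R.
Proof.
move=> Ht Hn.
have Hi : index n t < size t by rewrite index_mem.
have Hs : 0 < size t by case: t Ht {Hn Hi}.
rewrite -(nth_index (0,0) Hn) /tend -nth_last !col_nth //; last by rewrite prednK.
have Hi2 : index n t <= (size t).-1 by rewrite -ltnS prednK.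
split; [lia | by rewrite lerD2l lez_nat].
Qed.

Lemma tile_col_inj t n1 n2 : is_tile t -> n1 \in t -> n2 \in t -> col n1 = col n2 -> n1 = n2.
Proof.
move=> Ht H1 H2.
rewrite -(nth_index (0,0) H1) -(nth_index (0,0) H2) !col_nth ?index_mem // => E.
have -> : index n1 t = index n2 t by lia.
by [].
Qed.

Lemma tile_succ t n : is_tile t -> n \in t -> (col n < col (tend t))%R ->
  exists2 s, s \in t & tile_step n s.
Proof.
move=> Ht Hn.
have Hi : index n t < size t by rewrite index_mem.
have Hs : 0 < size t by case: t Ht {Hn Hi}.
rewrite -{1}(nth_index (0,0) Hn) /tend -nth_last !col_nth //; last by rewrite prednK.
move=> Hlt.
move: Hlt; rewrite ltrD2l ltz_nat => Hlt.
have Hi1 : (index n t).+1 < size t by rewrite -(prednK Hs) ltnS.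
exists (nth (0,0) t (index n t).+1); first by rewrite mem_nth.
clear Hlt; case: t Ht Hn Hi Hs Hi1 => [|x s] //= /(pathP (0,0)) Hp Hn Hi Hs Hi1.
have := Hp (index n (x :: s)) Hi1.
by rewrite nth_index.
Qed.

Lemma tile_pred t n : is_tile t -> n \in t -> (col (tstart t) < col n)%R ->
  exists2 p, p \in t & tile_step p n.
Proof.
move=> Ht Hn.
have Hi : index n t < size t by rewrite index_mem.
rewrite -(nth_index (0,0) Hn) !col_nth // => Hlt.
have Hi0 : 0 < index n t by lia.
exists (nth (0,0) t (index n t).-1); first by rewrite mem_nth // (leq_ltn_trans (leq_pred _)).
case: t Ht Hn Hi Hi0 Hlt => [|x s] //= /(pathP (0,0)) Hp Hn.
case: eqP => // _ Hi _ _.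
exact: Hp (index n s) Hi.
Qed.

Lemma count1_uniq (T0 : eqType) (p : pred T0) s x y :
  count p s = 1 -> x \in s -> y \in s -> p x -> p y -> x = y.
Proof.
elim: s => //= z s IH.
case: (boolP (p z)) => pz /=.
- rewrite add1n => -[c0].
  have /hasPn Hn : ~~ has p s by rewrite has_count c0.
  move=> Hx Hy px py.
  move: Hx Hy; rewrite !inE => /orP [/eqP -> | xs]; move=> /orP [/eqP -> // | ys].
  + by move: (Hn y ys); rewrite py.
  + by move: (Hn x xs); rewrite px.
  + by move: (Hn x xs); rewrite px.
- rewrite add0n => c1 Hx Hy px py.
  move: Hx Hy; rewrite !inE => /orP [/eqP Ex | xs]; first by move: pz; rewrite -Ex px.
  move=> /orP [/eqP Ey | ys]; first by move: pz; rewrite -Ey py.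
  exact: IH.
Qed.

Lemma tile_unique l m T t1 t2 n : is_Dyck_tiling l m T -> in_skew l m n ->
  t1 \in T -> t2 \in T -> n \in t1 -> n \in t2 -> t1 = t2.
Proof. by move=> [_ H] Hn H1 H2 n1 n2; apply: (count1_uniq (H n Hn)). Qed.

Lemma tile_exists l m T n : is_Dyck_tiling l m T -> in_skew l m n ->
  exists2 t, t \in T & n \in t.
Proof.
move=> [_ H] Hn.
have /hasP [t Ht Hnt] : has (fun t => n \in t) T by rewrite has_count H.
by exists t.
Qed.

Lemma part_nth (m : seq nat) i : sorted geq m -> nth 0 m i.+1 <= nth 0 m i.
Proof.
elim: m i => //= x s IH [|i] /= Hp.
- by case: s Hp {IH} => //= y s /andP [].
- apply: IH; exact: path_sorted Hp.
Qed.

Lemma c_skew l m x y : is_partition m -> in_skew l m (x, y) -> in_skew l m (x.+1, y.+1) ->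
  in_skew l m (x.+1, y).
Proof.
move=> /andP [Hm _]; rewrite /in_skew /in_diagram /= => /andP [_ H1] /andP [H2 _].
have H3 := part_nth x Hm.
apply/andP; split; first exact: ltnW.
rewrite -leqNgt; rewrite -leqNgt in H1; exact: leq_trans H1.
Qed.

Lemma dyck_tile l m T t : is_Dyck_tiling l m T -> t \in T -> is_tile t.
Proof. by move=> [H _] /H [/and3P []]. Qed.

Lemma tile_skew l m T t n : is_Dyck_tiling l m T -> t \in T -> n \in t -> in_skew l m n.
Proof. by move=> [H _] /H [_ ]; apply. Qed.

Lemma ht_le t n : n \in t -> ht n <= tile_ht t.
Proof. by move=> Hn; rewrite /tile_ht (leq_bigmax_seq n). Qed.

Lemma dyck_start l m T t : is_Dyck_tiling l m T -> t \in T -> ht (tstart t) = tile_ht t.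
Proof. by move=> [H _] /H [/and3P [_ /eqP -> _]]. Qed.

Lemma c_in_ta l m T ta tN x y : is_Dyck_tiling l m T -> cover_expansive l m T ->
  is_partition m -> ta \in T -> tN \in T -> (x, y) \in ta -> (x.+1, y.+1) \in tN ->
  (x.+1, y) \notin tN -> (x.+1, y) \in ta.
Proof.
move=> HT [HL HR] Hm HtaT HtNT Ha HN HcN.
have Sa := tile_skew HT HtaT Ha; have SN := tile_skew HT HtNT HN.
have Sc := c_skew Hm Sa SN.
have [tc HtcT Hc] := tile_exists HT Sc.
have Hr := HR (x.+1, y.+1) (x.+1, y) tN tc SN Sc erefl erefl HtNT HN HtcT Hc.
have [_ HNe] := tile_col_bounds (dyck_tile HT HtNT) HN.
have Hlt : (col (x.+1, y) < col (tend tc))%R.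
  move: HNe Hr; rewrite /col /=; lia.
have [[s1 s2] Hs Hst] := tile_succ (dyck_tile HT HtcT) Hc Hlt.
move: Hst; rewrite /tile_step /= => /orP [] /eqP [E1 E2].
- subst s1 s2.
  by move: HcN; rewrite -(tile_unique HT SN HtcT HtNT Hs HN) Hc.
- subst s1 s2.
  by rewrite (tile_unique HT Sa HtaT HtcT Ha Hs).
Qed.

Lemma start_case l m T ta tN x y : is_Dyck_tiling l m T -> cover_expansive l m T ->
  is_partition m -> ta \in T -> tN \in T -> (x, y) \in ta -> (x.+1, y.+1) \in tN ->
  tstart tN = (x.+1, y.+1) -> tile_ht tN <= tile_ht ta + 1.
Proof.
move=> HT HCE Hm HtaT HtNT Ha HN Hst.
have HcN : (x.+1, y) \notin tN.
  apply/negP => Hc.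
  have [H1 _] := tile_col_bounds (dyck_tile HT HtNT) Hc.
  move: H1; rewrite Hst /col /=; lia.
have Hc := c_in_ta HT HCE Hm HtaT HtNT Ha HN HcN.
have := ht_le Hc; rewrite -(dyck_start HT HtNT) Hst /ht /=; lia.
Qed.

Lemma main_ind l m T ta tN : is_Dyck_tiling l m T -> cover_expansive l m T ->
  is_partition m -> ta \in T -> tN \in T -> forall k x y,
  (col (x.+1, y.+1) - col (tstart tN) <= k%:Z)%R ->
  (x, y) \in ta -> (x.+1, y.+1) \in tN -> tile_ht tN <= tile_ht ta + 1.
Proof.
move=> HT HCE Hm HtaT HtNT.
have HtN := dyck_tile HT HtNT; have Hta := dyck_tile HT HtaT.
elim=> [|k IH] x y Hk Ha HN.
all: case: (ltP (col (tstart tN)) (col (x.+1, y.+1))) => Hs; last first.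
all: try (apply: (start_case HT HCE Hm HtaT HtNT Ha HN);
  apply: (tile_col_inj HtN (tile_nonempty HtN) HN);
  have [H1 _] := tile_col_bounds HtN HN; move: H1 Hs; lia).
have [[q1 q2] Hq Hqs] := tile_pred HtN HN Hs.
move: Hqs; rewrite /tile_step /= => /orP [] /eqP [E1 E2].
- subst q1 q2.
  have Sc := tile_skew HT HtNT Hq; have Sa := tile_skew HT HtaT Ha.
  have HL := HCE.1 (x.+1, y) (x, y) tN ta Sc Sa erefl erefl HtNT Hq HtaT Ha.
  have [H1 _] := tile_col_bounds HtN Hq.
  have Hlt : (col (tstart ta) < col (x, y))%R by move: HL H1; rewrite /col /=; lia.
  have [[p1 p2] Hp Hps] := tile_pred Hta Ha Hlt.
  move: Hps; rewrite /tile_step /= => /orP [] /eqP [E1 E2].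
  + subst p1 y.
    apply: (IH x p2) => //.
    move: Hk; rewrite /col /=; lia.
  + subst p1 p2.
    have Eq := tile_unique HT Sc HtaT HtNT Hp Hq.
    subst tN.
    have := tile_col_inj Hta Ha HN; rewrite /col /= => H.
    have : (x, y) = (x.+1, y.+1) by apply: H; lia.
    by case; lia.
- subst q1 q2.
  have HcN : (x.+1, y) \notin tN.
    apply/negP => Hc.
    have := tile_col_inj HtN Hc Hq; rewrite /col /= => H.
    have : (x.+1, y) = (x.+2, y.+1) by apply: H; lia.
    by case; lia.
  have Hc := c_in_ta HT HCE Hm HtaT HtNT Ha HN HcN.
  apply: (IH x.+1 y) => //.
  move: Hk; rewrite /col /=; lia.
Qed.

Theorem lemma4p4 (l m : seq nat) (T : seq (seq node)) (a : node) :
  is_partition l -> is_partition m -> contains l m ->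
  is_Dyck_tiling l m T -> cover_expansive l m T ->
  in_skew l m a -> in_skew l m (Nnode a) ->
  forall ta tN : seq node, ta \in T -> a \in ta -> tN \in T -> Nnode a \in tN ->
  dp tN (Nnode a) < dp ta a.
Proof.
case: a => x y Hl Hm _ HT HCE _ _ ta tN HtaT Ha HtNT HN.
rewrite /Nnode /= in HN *.
have [k Hk] : exists k : nat, (col (x.+1, y.+1) - col (tstart tN) <= k%:Z)%R.
  by exists `|col (x.+1, y.+1) - col (tstart tN)|%N; lia.
have H := main_ind HT HCE Hm HtaT HtNT Hk Ha HN.
have H1 := ht_le HN; have H2 := ht_le Ha.
move: H H1 H2; rewrite /dp /ht /=; lia.
Qed.
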